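(* Let $H:\underline{\mathcal Z}\to\mathcal Y$ be a linear functional that has the minimal FMP and is minimally continuous, and suppose the subspaces $\operatorname{span}(H\circ\delta^t(\mathcal B))$, $t\le0$, of $\mathcal Y$ are pairwise orthogonal. Let $(\mathbb H,\langle\cdot,\cdot\rangle_{\mathbb H})$ be the reproducing kernel Hilbert space associated to the kernel $K_H(\underline z^1,\underline z^2)=\langle H(\underline z^1),H(\underline z^2)\rangle_{\mathcal Y}$ on $\underline{\mathcal Z}$, with norm $\|\cdot\|_{\mathbb H}$. Let $T\in\mathbb Z_-$ and let $\mathbb H_T\subseteq\mathbb H$ be the subspace of all $f\in\mathbb H$ such that $f(\underline z)$ depends only on $z_T,\dots,z_0$. Let $M\in\mathbb N$, $\underline z^1,\dots,\underline z^M\in\underline{\mathcal Z}$, let $\Lambda:[0,\infty)\to[0,\infty)$ be strictly increasing and $\mathcal E:\mathbb R^M\to\mathbb R$ any function, and for $\underline z\in\underline{\mathcal Z}$ write $\tau_T(\underline z)=\sum_{t=T}^0\delta^t(z_t)$. Then $$\operatorname*{argmin}_{f\in\mathbb H}\ \mathcal E\big(f(\tau_T(\underline z^1)),\dots,f(\tau_T(\underline z^M))\big)+\Lambda(\|f\|_{\mathbb H})=\operatorname*{argmin}_{f\in\mathbb H_T}\ \mathcal E\big(f(\underline z^1),\dots,f(\underline z^M)\big)+\Lambda(\|f\|_{\mathbb H}).$$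
   Context: $(\mathcal Z,\langle\cdot,\cdot\rangle_{\mathcal Z})$ and $(\mathcal Y,\langle\cdot,\cdot\rangle_{\mathcal Y})$ are real Hilbert spaces; $\mathcal B$ is the closed unit ball of $\mathcal Z$. Let $\mathbb Z_-=\{0,-1,-2,\dots\}$; elements of $\mathcal Z^{\mathbb Z_-}$ are sequences $\underline z=(z_t)_{t\le0}$. For $t\in\mathbb Z_-$, $\delta^t:\mathcal Z\to\mathcal Z^{\mathbb Z_-}$ maps $z$ to the sequence with entry $z$ at time $t$ and $0$ elsewhere. Standing assumption: $\underline{\mathcal Z}\subseteq\mathcal Z^{\mathbb Z_-}$ is a set such that (a) $\underline{\mathcal Z}$ is convex and $\underline{\mathcal Z}=-\underline{\mathcal Z}$; (b) $\delta^t(\mathcal B)\subseteq\underline{\mathcal Z}$ for all $t\in\mathbb Z_-$; (c) for every $\underline z\in\underline{\mathcal Z}$ and $J\subseteq\mathbb Z_-$, the sequence $\sum_{t\in J}\delta^t(z_t)$ (equal to $z_t$ for $t\in J$ and $0$ elsewhere) belongs to $\underline{\mathcal Z}$. A functional $H:\underline{\mathcal Z}\to\mathcal Y$ is linear if it is the restriction of a linear map on $\operatorname{span}(\underline{\mathcal Z})$. $H$ is minimally continuous if $H\circ\delta^t:\mathcal B\to\mathcal Y$ is continuous for every $t$; $H$ has the minimal FMP if $H(\sum_{t=T}^0\delta^t(z_t))\to H(\underline z)$ as $T\to-\infty$ for every $\underline z\in\underline{\mathcal Z}$. The argmin sets are sets of minimizers (possibly empty). *)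

(* Defs.v *)
From HB Require Import structures.
From mathcomp Require Import all_boot all_order all_algebra.
From mathcomp Require Import boolp classical_sets reals.
Set Implicit Arguments. Unset Strict Implicit. Unset Printing Implicit Defensive.
Import Order.TTheory GRing.Theory Num.Theory.
Local Open Scope ring_scope.

Section Defs.
Variable R : realType.

Section IP.
Variable V : lmodType R.
Variable ip : V -> V -> R.

Definition is_inner_product : Prop :=
  [/\ (forall x y, ip x y = ip y x),
      (forall a x y z, ip (a *: x + y) z = a * ip x z + ip y z)
    & (forall x, x != 0 -> 0 < ip x x)].

Definition ipnorm (x : V) : R := Num.sqrt (ip x x).

Definition ip_complete : Prop :=
  forall u : nat -> V,
    (forall e : R, 0 < e -> exists N : nat, forall m n : nat,
        (N <= m)%N -> (N <= n)%N -> ipnorm (u m - u n) < e) ->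
    exists l : V, forall e : R, 0 < e -> exists N : nat, forall n : nat,
        (N <= n)%N -> ipnorm (u n - l) < e.

Definition is_hilbert : Prop := is_inner_product /\ ip_complete.
End IP.

(* ---------- left-infinite sequences  (z_t)_{t <= 0} ----------
   A sequence indexed by Z_- = {0,-1,-2,...} is encoded as  s : nat -> Z,
   with  s n  standing for  z_{-n}. *)
Section Seq.
Variable Z : lmodType R.

Definition sadd (x y : nat -> Z) : nat -> Z := fun k => x k + y k.
Definition sscale (a : R) (x : nat -> Z) : nat -> Z := fun k => a *: x k.
Definition szero : nat -> Z := fun _ => 0.

Definition delta (n : nat) (z : Z) : nat -> Z :=
  fun k => if k == n then z else 0.

(* sum_{t in J} delta^t(z_t), J a subset of Z_- (encoded by J : pred nat) *)
Definition restr (J : pred nat) (x : nat -> Z) : nat -> Z :=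
  fun k => if J k then x k else 0.

(* tau_{-N}(z) = sum_{t=-N}^0 delta^t(z_t) *)
Definition trunc (N : nat) (x : nat -> Z) : nat -> Z :=
  restr (fun k => (k <= N)%N) x.

Definition standing_assumption (ipZ : Z -> Z -> R) (Zbar : set (nat -> Z))
  : Prop :=
  [/\ (forall x y (l : R), Zbar x -> Zbar y -> 0 <= l -> l <= 1 ->
          Zbar (sadd (sscale l x) (sscale (1 - l) y))),
      (forall x, Zbar x -> Zbar (sscale (-1) x)),
      (forall x, Zbar (sscale (-1) x) -> Zbar x)
    & (forall (n : nat) (z : Z), ipnorm ipZ z <= 1 -> Zbar (delta n z))].

Definition restr_closed (Zbar : set (nat -> Z)) : Prop :=
  forall (J : pred nat) x, Zbar x -> Zbar (restr J x).

Inductive in_span (S : set (nat -> Z)) : (nat -> Z) -> Prop :=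
  | span_zero : in_span S szero
  | span_gen x : S x -> in_span S x
  | span_comb a x y : in_span S x -> in_span S y ->
      in_span S (sadd (sscale a x) y).

End Seq.

Section Functional.
Variables (Z Y : lmodType R) (ipZ : Z -> Z -> R) (ipY : Y -> Y -> R).
Variable Zbar : set (nat -> Z).
Variable H : (nat -> Z) -> Y.

Definition functional_linear : Prop :=
  exists L : (nat -> Z) -> Y,
    (forall x, Zbar x -> L x = H x) /\
    (forall a x y, in_span Zbar x -> in_span Zbar y ->
       L (sadd (sscale a x) y) = a *: L x + L y).

Definition minimally_continuous : Prop :=
  forall (n : nat) (z : Z), ipnorm ipZ z <= 1 ->
    forall e : R, 0 < e -> exists2 d : R, 0 < d &
      forall w : Z, ipnorm ipZ w <= 1 -> ipnorm ipZ (w - z) < d ->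
        ipnorm ipY (H (delta n w) - H (delta n z)) < e.

Definition minimal_FMP : Prop :=
  forall x, Zbar x ->
    forall e : R, 0 < e -> exists N0 : nat, forall N : nat, (N0 <= N)%N ->
      ipnorm ipY (H (trunc N x) - H x) < e.

(* the subspaces span(H o delta^t (B)), t <= 0, are pairwise orthogonal
   (stated on generators; by bilinearity this is orthogonality of spans) *)
Definition orthogonal_components : Prop :=
  forall (n m : nat) (z w : Z), n <> m ->
    ipnorm ipZ z <= 1 -> ipnorm ipZ w <= 1 ->
    ipY (H (delta n z)) (H (delta m w)) = 0.
End Functional.

Section RKHS.
Variable X : Type.
Variable K : X -> X -> R.
Variables (HS : set (X -> R)) (ipH : (X -> R) -> (X -> R) -> R).

Definition fadd (f g : X -> R) : X -> R := fun x => f x + g x.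
Definition fscale (a : R) (f : X -> R) : X -> R := fun x => a * f x.
Definition Hnorm (f : X -> R) : R := Num.sqrt (ipH f f).

(* (HS, ipH) is the reproducing kernel Hilbert space of K:
   a Hilbert space of real functions on X containing every K(., x)
   and satisfying the reproducing property. (Unique by Moore-Aronszajn.) *)
Definition is_RKHS : Prop :=
  HS (fun _ => 0) /\
  (forall a f g, HS f -> HS g -> HS (fadd (fscale a f) g)) /\
  (forall f g, HS f -> HS g -> ipH f g = ipH g f) /\
  (forall a f g h, HS f -> HS g -> HS h ->
      ipH (fadd (fscale a f) g) h = a * ipH f h + ipH g h) /\
  (forall f, HS f -> f <> (fun _ => 0) -> 0 < ipH f f) /\
  (forall u : nat -> X -> R, (forall n, HS (u n)) ->
    (forall e : R, 0 < e -> exists N : nat, forall m n : nat,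
        (N <= m)%N -> (N <= n)%N ->
        Hnorm (fadd (u m) (fscale (-1) (u n))) < e) ->
    exists2 l, HS l & forall e : R, 0 < e -> exists N : nat,
        forall n : nat, (N <= n)%N ->
        Hnorm (fadd (u n) (fscale (-1) l)) < e) /\
  (forall x, HS (fun y => K y x)) /\
  (forall f x, HS f -> f x = ipH f (fun y => K y x)).
End RKHS.

Definition argmin (T : Type) (S : set T) (F : T -> R) : set T :=
  [set x | S x /\ forall y, S y -> F x <= F y].

End Defs.

(* tau_{-N} as a map Zbar -> Zbar, using standing assumption (c) *)
Definition tauZB (R : realType) (Z : lmodType R) (Zbar : set (nat -> Z))
  (hc : restr_closed Zbar) (N : nat) (z : {x | Zbar x}) : {x | Zbar x} :=
  exist _ (trunc N (proj1_sig z)) (hc _ _ (proj2_sig z)).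

(* H_T (T = -N): functions of HS depending only on z_{-N},...,z_0 *)
Definition depends_on_window (R : realType) (Z : lmodType R)
  (Zbar : set (nat -> Z)) (N : nat) (f : {x | Zbar x} -> R) : Prop :=
  forall z1 z2 : {x | Zbar x},
    (forall k, (k <= N)%N -> proj1_sig z1 k = proj1_sig z2 k) -> f z1 = f z2.

(* Main.v *)
Require Import Defs.
From HB Require Import structures.
From mathcomp Require Import all_boot all_order all_algebra.
From mathcomp Require Import boolp classical_sets reals.
From mathcomp Require Import ring lra.
Import Order.TTheory GRing.Theory Num.Theory.
Local Open Scope ring_scope.

Section IPL.
Variables (R : realType) (V : lmodType R) (ip : V -> V -> R).
Hypothesis hip : is_inner_product ip.

Lemma ipC x y : ip x y = ip y x.
Proof. by case: hip. Qed.
Lemma ipL a x y z : ip (a *: x + y) z = a * ip x z + ip y z.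
Proof. by case: hip. Qed.
Lemma ip0l z : ip 0 z = 0.
Proof.
have := ipL 1 0 0 z; rewrite scaler0 addr0 mul1r => h.
lra.
Qed.
Lemma ipDl x y z : ip (x + y) z = ip x z + ip y z.
Proof. by have := ipL 1 x y z; rewrite scale1r mul1r. Qed.
Lemma ipZl a x z : ip (a *: x) z = a * ip x z.
Proof. by have := ipL a x 0 z; rewrite addr0 ip0l addr0. Qed.
Lemma ipBl x y z : ip (x - y) z = ip x z - ip y z.
Proof. by rewrite ipDl -scaleN1r ipZl mulN1r. Qed.
Lemma ipDr x y z : ip z (x + y) = ip z x + ip z y.
Proof. by rewrite ipC ipDl !(ipC _ z). Qed.
Lemma ipZr a x z : ip z (a *: x) = a * ip z x.
Proof. by rewrite ipC ipZl ipC. Qed.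
Lemma ip0r z : ip z 0 = 0.
Proof. by rewrite ipC ip0l. Qed.
Lemma ip_ge0 x : 0 <= ip x x.
Proof.
case: (eqVneq x 0) => [->|nx]; first by rewrite ip0l.
by apply: ltW; case: hip => _ _; apply.
Qed.

Lemma ipnormZ a x : ipnorm ip (a *: x) = `|a| * ipnorm ip x.
Proof.
rewrite /ipnorm ipZl ipZr mulrA sqrtrM ?sqrtr_sqr //.
by rewrite -expr2 sqr_ge0.
Qed.


Lemma ip_expand a x y :
  ip (a *: x + y) (a *: x + y) = a ^+ 2 * ip x x + 2 * a * ip x y + ip y y.
Proof.
rewrite ipL !ipDr !ipZr (ipC y x); ring.
Qed.

Lemma ip_lim0 a b :
  (forall e : R, 0 < e -> exists a', ipnorm ip (a' - a) < e /\ ip a' b = 0) ->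
  ip a b = 0.
Proof.
move=> hl; set c := ip a b; set B := ip b b.
have B0 : 0 <= B by apply: ip_ge0.
apply/eqP; apply/negPn/negP => c0.
have ac : 0 < `|c| by rewrite normr_gt0.
set t := (B + 1) / `|c|.
have t0 : 0 < t by apply: divr_gt0 => //; lra.
have htc : t * `|c| = B + 1 by rewrite /t mulfVK // gt_eqF.
have [a' [hn ho]] := hl (t^-1) ltac:(by rewrite invr_gt0).
set d := a' - a.
have hd : ip d b = - c by rewrite /d ipBl ho sub0r.
have D0 : 0 <= ip d d by apply: ip_ge0.
have hs : Num.sqrt (ip d d) ^+ 2 = ip d d by rewrite sqr_sqrtr.
have s0 : 0 <= Num.sqrt (ip d d) by apply: sqrtr_ge0.
have hts : t * Num.sqrt (ip d d) < 1.
  by rewrite -(mulfV (lt0r_neq0 t0)) ltr_pM2l.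
have e1 := ip_ge0 (t *: d + b).
have e2 := ip_ge0 (t *: d + (- b)).
rewrite ip_expand hd in e1.
rewrite ip_expand -scaleN1r !ipZr !ipZl hd in e2.
rewrite -/B in e1 e2.
have hD : t ^+ 2 * ip d d < 1.
  rewrite -hs -exprMn; have := hts; set u := t * _ => hu.
  have : 0 <= u by rewrite /u mulr_ge0 // ltW.
  move=> u0; nra.
move: htc; case: (ltrgtP c 0) => hc0 htc; last by move: c0; rewrite hc0 eqxx.
- rewrite ltr0_norm // in htc; nra.
- rewrite gtr0_norm // in htc; nra.
Qed.
End IPL.

Section SeqL.
Variables (R : realType) (Z Y : lmodType R) (ipZ : Z -> Z -> R) (ipY : Y -> Y -> R).
Hypothesis hZ : is_inner_product ipZ.
Hypothesis hY : is_inner_product ipY.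
Variable Zbar : set (nat -> Z).
Hypothesis hd : forall (n : nat) (z : Z), ipnorm ipZ z <= 1 -> Zbar (delta n z).
Hypothesis hc : restr_closed Zbar.
Variables (H L : (nat -> Z) -> Y).
Hypothesis HL : forall x, Zbar x -> L x = H x.
Hypothesis LL : forall a x y, in_span Zbar x -> in_span Zbar y ->
       L (sadd (sscale a x) y) = a *: L x + L y.
Hypothesis horth : orthogonal_components ipZ ipY H.
Hypothesis hfmp : minimal_FMP ipY Zbar H.

Local Notation sz := (@szero R Z).

Lemma sp_eq x y : in_span Zbar x -> x = y -> in_span Zbar y.
Proof. by move=> h <-. Qed.

Lemma L0 : L sz = 0.
Proof.
have e : sadd (sscale 1 sz) sz = sz.
  by apply: funext => k; rewrite /sadd /sscale /szero scaler0 addr0.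
have := LL 1 sz sz (span_zero Zbar) (span_zero Zbar); rewrite e scale1r => h.
by move: (congr1 (fun v => v - L sz) h); rewrite subrr addrK => /esym.
Qed.

Lemma sadd1 (x y : nat -> Z) : sadd (sscale 1 x) y = sadd x y.
Proof. by apply: funext => k; rewrite /sadd /sscale scale1r. Qed.

Lemma sp_add x y : in_span Zbar x -> in_span Zbar y -> in_span Zbar (sadd x y).
Proof. by move=> hx hy; rewrite -sadd1; apply: span_comb. Qed.

Lemma Ladd x y : in_span Zbar x -> in_span Zbar y -> L (sadd x y) = L x + L y.
Proof. by move=> hx hy; rewrite -sadd1 LL // scale1r. Qed.

Lemma Ldelta m w : in_span Zbar (delta m w) /\
  exists c w', ipnorm ipZ w' <= 1 /\ L (delta m w) = c *: H (delta m w').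
Proof.
have n0 : 0 <= ipnorm ipZ w by apply: sqrtr_ge0.
set c := ipnorm ipZ w + 1.
have c0 : 0 < c by rewrite /c; lra.
set w' := c^-1 *: w.
have hw' : ipnorm ipZ w' <= 1.
  rewrite /w' ipnormZ // ger0_norm; last by rewrite invr_ge0 ltW.
  rewrite mulrC ler_pdivrMr // mul1r /c; lra.
have e : delta m w = sadd (sscale c (delta m w')) sz.
  apply: funext => k; rewrite /sadd /sscale /szero /delta addr0.
  case: (k == m); last by rewrite scaler0.
  by rewrite /w' scalerA mulfV ?lt0r_neq0 // scale1r.
have sp : in_span Zbar (delta m w).
  by rewrite e; apply: span_comb; [apply: span_gen; apply: hd|apply: span_zero].
split => //; exists c, w'; split => //.
rewrite e LL ?L0 ?addr0 ?HL //; [exact: hd|apply: span_gen; exact: hd|exact: span_zero].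
Qed.

Lemma orthL m n w u : m <> n -> ipY (L (delta m w)) (L (delta n u)) = 0.
Proof.
move=> mn.
have [_ [c [w' [h1 ->]]]] := Ldelta m w.
have [_ [c' [u' [h2 ->]]]] := Ldelta n u.
by rewrite ipZl // ipZr // horth // !mulr0.
Qed.

Lemma trunc0 (x : nat -> Z) : trunc 0 x = delta 0 (x 0%N).
Proof.
apply: funext => k; rewrite /trunc /restr /delta leqn0.
by case: eqP => // ->.
Qed.

Lemma truncS n (x : nat -> Z) : trunc n.+1 x = sadd (trunc n x) (delta n.+1 (x n.+1)).
Proof.
apply: funext => k; rewrite /trunc /restr /delta /sadd.
have [kn|kn] := leqP k n.
  by rewrite (leq_trans kn (leqnSn n)) (ltn_eqF (leq_ltn_trans kn (ltnSn n))) addr0.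
rewrite add0r; case: eqP => [->|kn1]; first by rewrite leqnn.
by rewrite leqNgt ltn_neqAle eq_sym; move/eqP: kn1 => ->; rewrite kn.
Qed.

Lemma trunc_span n x : in_span Zbar (trunc n x).
Proof.
elim: n => [|n IH]; first by rewrite trunc0; case: (Ldelta 0 (x 0%N)).
by rewrite truncS; apply: sp_add => //; case: (Ldelta n.+1 (x n.+1)).
Qed.

Lemma O1 n m w x : (n < m)%N -> ipY (L (delta m w)) (L (trunc n x)) = 0.
Proof.
elim: n => [|n IH] hnm.
  by rewrite trunc0 orthL // => e; move: hnm; rewrite e.
rewrite truncS Ladd ?trunc_span ?ipDr ?IH ?orthL ?add0r //.
- by move=> e; move: hnm; rewrite e ltnn.
- by apply: ltnW.
- exact: trunc_span.
- by case: (Ldelta n.+1 (x n.+1)).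
Qed.

Lemma delta0 m : delta m (0 : Z) = sz.
Proof. by apply: funext => k; rewrite /delta /szero if_same. Qed.

Lemma Otail N z x M :
  ipY (L (trunc M (restr (fun k => (N < k)%N) z))) (L (trunc N x)) = 0.
Proof.
set tl := restr _ z.
have hm : forall m, ipY (L (delta m (tl m))) (L (trunc N x)) = 0.
  move=> m; have [nm|nm] := ltnP N m; first exact: O1.
  by rewrite /tl /restr ltnNge nm /= delta0 L0 ip0l.
elim: M => [|M IH]; first by rewrite trunc0.
rewrite truncS Ladd; [|exact: trunc_span|by case: (Ldelta M.+1 (tl M.+1))].
by rewrite ipDl // IH hm addr0.
Qed.

Lemma keyA N z x : Zbar z -> Zbar x ->
  ipY (H z) (H (trunc N x)) = ipY (H (trunc N z)) (H (trunc N x)).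
Proof.
move=> hz hx.
set tl := restr (fun k => (N < k)%N) z.
have htl : Zbar tl by apply: hc.
have htz : Zbar (trunc N z) by apply: hc.
have htx : Zbar (trunc N x) by apply: hc.
have ez : z = sadd (trunc N z) tl.
  apply: funext => k; rewrite /sadd /tl /trunc /restr.
  by case: leqP => _; rewrite ?addr0 ?add0r.
have -> : H z = H (trunc N z) + H tl.
  by rewrite -HL // {1}ez Ladd ?HL ?trunc_span //; apply: span_gen.
rewrite ipDl // (_ : ipY (H tl) _ = 0) ?addr0 //.
apply: ip_lim0 => // e e0.
have [N0 hN0] := hfmp _ htl _ e0.
exists (H (trunc N0 tl)); split; first exact: hN0.
by rewrite -!HL //; [apply: Otail | apply: hc].
Qed.
End SeqL.

Section HSL.
Variables (R : realType) (X : Type) (HS : set (X -> R)) (ipH : (X -> R) -> (X -> R) -> R).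
Hypothesis HS0 : HS (fun _ => 0).
Hypothesis HSc : forall a f g, HS f -> HS g -> HS (fadd (fscale a f) g).
Hypothesis HSC : forall f g, HS f -> HS g -> ipH f g = ipH g f.
Hypothesis HSL : forall a f g h, HS f -> HS g -> HS h ->
      ipH (fadd (fscale a f) g) h = a * ipH f h + ipH g h.
Hypothesis HSP : forall f, HS f -> f <> (fun _ => 0) -> 0 < ipH f f.

Lemma HSCi {f g} : HS f -> HS g -> ipH f g = ipH g f.
Proof. exact: HSC. Qed.
Lemma HSLi a {f g h} : HS f -> HS g -> HS h ->
      ipH (fadd (fscale a f) g) h = a * ipH f h + ipH g h.
Proof. exact: HSL. Qed.
Lemma HSPi {f} : HS f -> f <> (fun _ => 0) -> 0 < ipH f f.
Proof. exact: HSP. Qed.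

Definition fsub (f g : X -> R) := fadd (fscale (-1) g) f.
Definition f0 : X -> R := fun _ => 0.

Lemma HSsub f g : HS f -> HS g -> HS (fsub f g).
Proof. by move=> *; apply: HSc. Qed.

Lemma H0l h : HS h -> ipH f0 h = 0.
Proof.
move=> hh; have e : fadd (fscale 1 f0) f0 = f0.
  by apply: funext => x; rewrite /fadd /fscale /f0 mulr0 addr0.
have := HSLi 1 HS0 HS0 hh; rewrite e mul1r => ?; lra.
Qed.

Lemma Hsubl {f g h} : HS f -> HS g -> HS h -> ipH (fsub f g) h = ipH f h - ipH g h.
Proof. by move=> *; rewrite /fsub HSLi //; lra. Qed.

Lemma HaddZl a f g h : HS f -> HS g -> HS h ->
  ipH h (fadd (fscale a f) g) = a * ipH h f + ipH h g.
Proof. move=> hf hg hh; rewrite (HSCi hh) ?HSLi // ?(HSCi hh hf) ?(HSCi hh hg) //; exact: HSc. Qed.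

Lemma H_ge0 f : HS f -> 0 <= ipH f f.
Proof.
move=> hf; case: (pselect (f = f0)) => [->|nf]; first by rewrite H0l.
by apply: ltW; apply: HSP.
Qed.

Section GS.
Variable Q : (X -> R) -> Prop.
Hypothesis HQ : forall f, Q f -> HS f.
Hypothesis Q0 : Q f0.
Hypothesis Qc : forall a f g, Q f -> Q g -> Q (fadd (fscale a f) g).

Lemma GS (s : nat -> X -> R) (Hs : forall k, Q (s k)) (n : nat) :
  forall f, HS f -> exists h, [/\ Q h,
    (forall k, (k < n)%N -> ipH (fsub f h) (s k) = 0) &
    (forall w, HS w -> (forall k, (k < n)%N -> ipH w (s k) = 0) -> ipH w h = 0)].
Proof.
elim: n => [|n IH] f hf.
  exists f0; split => // w hw _; by rewrite HSCi // H0l.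
have [h1 [Qh1 o1 p1]] := IH f hf.
have [p [Qp o2 p2]] := IH (s n) (HQ _ (Hs n)).
set r := fsub (s n) p.
have Qr : Q r by rewrite /r /fsub; apply: Qc.
have HSr := HQ _ Qr; have HSp := HQ _ Qp; have HSh1 := HQ _ Qh1; have HSv := HQ _ (Hs n).
have vrp : s n = fadd (fscale 1 r) p.
  by apply: funext => x; rewrite /r /fsub /fadd /fscale; ring.
have hv : forall g, HS g -> ipH g (s n) = ipH g r + ipH g p.
  by move=> g hg; rewrite vrp HaddZl // mul1r.
have rperp : forall k, (k < n)%N -> ipH r (s k) = 0 by [].
have fh1 : HS (fsub f h1) by apply: HSsub.
have rp : ipH r p = 0 by apply: p2.
have fp : ipH (fsub f h1) p = 0 by apply: p2.
case: (pselect (ipH r r = 0)) => [rr0|rr0].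
  have r0 : r = f0.
    apply: contrapT => nr; have := HSPi HSr nr; rewrite rr0 ltxx //.
  have vp : s n = p.
    by rewrite vrp r0; apply: funext => x; rewrite /fadd /fscale /f0; ring.
  exists h1; split => //.
    move=> k; rewrite ltnS leq_eqVlt => /orP [/eqP ->|]; first by rewrite vp.
    exact: o1.
  by move=> w hw hk; apply: p1 => // k hk'; apply: hk; apply: ltnW.
have rpos : 0 < ipH r r by rewrite lt_def H_ge0 // andbT; apply/eqP.
set c := ipH (fsub f h1) r / ipH r r.
exists (fadd (fscale c r) h1); split; first by apply: Qc.
  move=> k hk; have HSk := HQ _ (Hs k).
  rewrite Hsubl //; last by apply: HSc.
  rewrite HSLi //.
  move: hk; rewrite ltnS leq_eqVlt => /orP [/eqP ->|hk].
    rewrite !hv //.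
    rewrite (Hsubl hf HSh1 HSp) in fp.
    have cr : c * ipH r r = ipH f r - ipH h1 r.
      by rewrite /c mulfVK ?lt0r_neq0 // (Hsubl hf HSh1 HSr).
    rewrite rp mulrDr mulr0 addr0 cr; lra.
  have := o1 k hk; rewrite (Hsubl hf HSh1 HSk) => e1.
  have := o2 k hk; rewrite -/r => e2; rewrite e2; lra.
move=> w hw hk.
rewrite HaddZl // p1 //; last by move=> k hk'; apply: hk; apply: ltnW.
have -> : ipH w r = 0.
  rewrite HSCi // Hsubl // -(HSCi hw HSv) hk // -(HSCi hw HSp) p2 //; first by lra.
  by move=> k hk'; apply: hk; apply: ltnW.
by rewrite mulr0 addr0.
Qed.

End GS.

Lemma proj_norm f h : HS f -> HS h -> ipH (fsub f h) h = 0 ->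
  Hnorm ipH h < Hnorm ipH f \/ h = f.
Proof.
move=> hf hh o.
have hr : HS (fsub f h) by apply: HSsub.
have e : f = fadd (fscale 1 h) (fsub f h).
  by apply: funext => x; rewrite /fsub /fadd /fscale; ring.
have e1 : ipH h f = ipH h h + ipH h (fsub f h).
  by rewrite {1}e HaddZl // mul1r.
have e2 : ipH (fsub f h) f = ipH (fsub f h) h + ipH (fsub f h) (fsub f h).
  by rewrite [X in ipH _ X = _]e HaddZl // mul1r.
have ef : ipH f f = ipH h h + ipH (fsub f h) (fsub f h).
  rewrite {1}e HSLi // mul1r e1 e2 o (HSCi hh hr) o; lra.
case: (pselect (ipH (fsub f h) (fsub f h) = 0)) => [r0|r0].
  right; have : fsub f h = f0.
    apply: contrapT => nr; have := HSPi hr nr; rewrite r0 ltxx //.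
  move=> ez; apply: funext => x; have := congr1 (fun g => g x) ez.
  rewrite /fsub /fadd /fscale /f0 => ?; lra.
have rp : 0 < ipH (fsub f h) (fsub f h).
  by rewrite lt_def H_ge0 // andbT; apply/eqP.
have := H_ge0 _ hh => hp.
left; rewrite /Hnorm ltr_sqrt; lra.
Qed.
End HSL.

Theorem proposition4p4 (R : realType) (Z Y : lmodType R)
  (ipZ : Z -> Z -> R) (ipY : Y -> Y -> R)
  (hZ : is_hilbert ipZ) (hY : is_hilbert ipY)
  (Zbar : set (nat -> Z))
  (hab : standing_assumption ipZ Zbar) (hc : restr_closed Zbar)
  (H : (nat -> Z) -> Y)
  (hlin : functional_linear Zbar H)
  (hfmp : minimal_FMP ipY Zbar H)
  (hcont : minimally_continuous ipZ ipY H)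
  (horth : orthogonal_components ipZ ipY H)
  (HS : set ({x | Zbar x} -> R))
  (ipH : ({x | Zbar x} -> R) -> ({x | Zbar x} -> R) -> R)
  (hRKHS : is_RKHS
     (fun z1 z2 : {x | Zbar x} => ipY (H (proj1_sig z1)) (H (proj1_sig z2)))
     HS ipH)
  (N : nat) (M : nat) (zs : 'I_M -> {x | Zbar x})
  (Lam : R -> R)
  (hLam0 : forall x, 0 <= x -> 0 <= Lam x)
  (hLam : forall x y, 0 <= x -> x < y -> Lam x < Lam y)
  (E : 'rV[R]_M -> R) :
  argmin HS
    (fun f => E (\row_(i < M) f (tauZB hc N (zs i))) + Lam (Hnorm ipH f))
  = argmin [set f | HS f /\ depends_on_window N f]
    (fun f => E (\row_(i < M) f (zs i)) + Lam (Hnorm ipH f)).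
Proof.
case: hY => hYi _.
case: hZ => hZi _.
case: hab => _ _ _ hd.
case: hlin => L [HL LL].
case: hRKHS => HS0 [HSc [HSC [HSL [HSP [_ [Hk Hrep]]]]]].
set X := ({x | Zbar x} : Type).
set K := fun z1 z2 : X => ipY (H (proj1_sig z1)) (H (proj1_sig z2)).
have W : forall g : X -> R, depends_on_window N g ->
    forall z, g (tauZB hc N z) = g z.
  move=> g hg z; apply: hg => k hk /=; by rewrite /trunc /restr hk.
set Q := fun f : X -> R => HS f /\ depends_on_window N f.
have HQ : forall f, Q f -> HS f by move=> f [].
have Q0 : Q (f0 R X).
  split => //; exact: HS0.
have Qc : forall a f g, Q f -> Q g -> Q (fadd (fscale a f) g).
  move=> a f g [hf wf] [hg wg]; split; first exact: HSc.
  by move=> z1 z2 hz; rewrite /fadd /fscale (wf _ _ hz) (wg _ _ hz).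
set v := fun i : 'I_M => (fun y : X => K y (tauZB hc N (zs i))).
have Qv : forall i, Q (v i).
  move=> i; split; first exact: Hk.
  move=> z1 z2 hz; rewrite /v /K /=.
  have kA := @keyA R Z Y ipZ ipY hZi hYi Zbar hd hc H L HL LL horth hfmp N.
  rewrite (kA _ _ (proj2_sig z1) (proj2_sig (zs i))) (kA _ _ (proj2_sig z2) (proj2_sig (zs i))).
  have -> : trunc N (proj1_sig z1) = trunc N (proj1_sig z2).
    apply: funext => k; rewrite /trunc /restr; case: leqP => // kn.
    exact: hz.
  by [].
set s := fun k : nat => match insub k with Some i => v i | None => f0 R X end.
have Hs : forall k, Q (s k).
  by move=> k; rewrite /s; case: insub.
have sv : forall i : 'I_M, s (val i) = v i by move=> i; rewrite /s valK.
have proj : forall f, HS f -> exists h, [/\ Q h,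
    (forall i, h (zs i) = f (tauZB hc N (zs i))) &
    (Hnorm ipH h < Hnorm ipH f \/ h = f)].
  move=> f hf.
  have [h [Qh o p]] := @GS _ _ _ _ HS0 HSc HSC HSL HSP Q HQ Q0 Qc s Hs M f hf.
  have hh := HQ _ Qh.
  exists h; split => //.
    move=> i; rewrite -(W h Qh.2) Hrep // (Hrep f) //.
    have := o (val i) (ltn_ord i); rewrite sv (@Hsubl _ _ _ _ HSL) //.
      by move=> e; rewrite /v in e; lra.
    exact: Hk.
  apply: (@proj_norm _ _ _ _ HS0 HSc HSC HSL HSP) => //.
  apply: p; first exact: (@HSsub _ _ _ HSc).
  exact: o.
apply: funext => f; apply: propext; split.
- move=> [hf hmin].
  have [h [Qh hv hn]] := proj f hf.
  have hmh := hmin h Qh.1.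
  have rr : \row_(i < M) h (tauZB hc N (zs i)) = \row_(i < M) f (tauZB hc N (zs i)).
    by apply/rowP => i; rewrite !mxE W ?hv //; case: Qh.
  rewrite rr in hmh.
  have hf' : h = f.
    case: hn => // hlt; exfalso.
    have := hLam _ _ (sqrtr_ge0 _) hlt; lra.
  subst h.
  split => // g [hg wg].
  have r1 : \row_(i < M) f (zs i) = \row_(i < M) f (tauZB hc N (zs i)).
    by apply/rowP => i; rewrite !mxE W //; case: Qh.
  have r2 : \row_(i < M) g (zs i) = \row_(i < M) g (tauZB hc N (zs i)).
    by apply/rowP => i; rewrite !mxE W.
  rewrite r1 r2; exact: hmin.
- move=> [[hg wg] hmin]; split => // f' hf.
  have [h [Qh hv hn]] := proj f' hf.
  have hmh := hmin h Qh.
  have r1 : \row_(i < M) h (zs i) = \row_(i < M) f' (tauZB hc N (zs i)).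
    by apply/rowP => i; rewrite !mxE hv.
  have r2 : \row_(i < M) f (tauZB hc N (zs i)) = \row_(i < M) f (zs i).
    by apply/rowP => i; rewrite !mxE W.
  rewrite r1 in hmh; rewrite r2.
  case: hn => [hlt|e]; first last.
    by rewrite e in hmh.
  have := hLam _ _ (sqrtr_ge0 _) hlt; lra.
Qed.
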